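(* For every integer $n\ge1$ and every positive multiple $m$ of $4$, the graph $G_{n,m}$ is vertex transitive.
   Context: For $m$ a multiple of $4$ and $n\ge1$, $G_{n,m}$ is the simple graph with vertex set $\{i(a,b): i\in\mathbb{Z}_m,\ a,b\in\mathbb{Z}_n\}$ ($n^2m$ vertices; the vertices with first index $i$ form cluster $i$, clusters arranged as the nodes of the cycle $\mathbb{Z}_m$, labelled $0,\dots,m-1$), with an edge between: (1) all pairs $i(a,b),j(c,d)$ with $i$ and $j$ adjacent in $\mathbb{Z}_m$ (''short'' edges); (2) all pairs $i(a,b),j(a,d)$ with $b\ne d$, $i$ even and $j=(i+m/4)\bmod m$; (3) all pairs $i(a,b),j(c,b)$ with $a\ne c$, $i$ even and $j=(i-m/4)\bmod m$; (4) all pairs $i(a,b),j(c,b)$ with $a\ne c$, $i$ odd and $j=(i+m/4)\bmod m$; (5) all pairs $i(a,b),j(a,d)$ with $b\ne d$, $i$ odd and $j=(i-m/4)\bmod m$. *)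

(* Defs.v *)
From mathcomp Require Import all_boot all_fingroup.
Set Implicit Arguments. Unset Strict Implicit. Unset Printing Implicit Defensive.

(* Vertex i(a,b) of G_{n,m}: cluster i in Z_m (as 'I_m), a b in Z_n (as 'I_n). *)
Definition vtx (m n : nat) : finType := ('I_m * ('I_n * 'I_n))%type.

Definition cyc_adj (m i j : nat) : bool :=
  (j == (i + 1) %% m) || (i == (j + 1) %% m).

Definition plusq (m i : nat) : nat := (i + m %/ 4) %% m.
Definition minusq (m i : nat) : nat := (i + m - m %/ 4) %% m.

(* Directed version of the edge rules (1)-(5), from x = i(a,b) to y = j(c,d). *)
Definition dedge (m n : nat) (x y : vtx m n) : bool :=
  let i := nat_of_ord x.1 in let a := x.2.1 in let b := x.2.2 in
  let j := nat_of_ord y.1 in let c := y.2.1 in let d := y.2.2 in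
  [|| cyc_adj m i j,
      [&& ~~ odd i, j == plusq m i, a == c & b != d],
      [&& ~~ odd i, j == minusq m i, b == d & a != c],
      [&& odd i, j == plusq m i, b == d & a != c]
    | [&& odd i, j == minusq m i, a == c & b != d]].

Definition Gadj (m n : nat) : rel (vtx m n) := fun x y => dedge x y || dedge y x.

Definition is_graph_aut (T : finType) (e : rel T) (f : {perm T}) : Prop :=
  forall u v, e (f u) (f v) = e u v.

Definition vertex_transitive (T : finType) (e : rel T) : Prop :=
  forall x y : T, exists f : {perm T}, is_graph_aut e f /\ f x = y.

(* Main.v *)
Require Import Defs.
From mathcomp Require Import all_boot all_fingroup.

Lemma shift_eq (m i j k c : nat) : j < m ->
  (((j + k) %% m) == (((i + k) %% m + c) %% m)) = (j == (i + c) %% m).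
Proof.
move=> hj; rewrite modnDml addnAC eqn_modDr.
by rewrite [in LHS](modn_small hj).
Qed.

Lemma minusqE (m i : nat) : minusq m i = (i + (m - m %/ 4)) %% m.
Proof. by rewrite /minusq addnBA // leq_div. Qed.

Definition gfun (m n : nat) (mpos : 0 < m) (k : nat) (s t : {perm 'I_n})
  (x : vtx m n) : vtx m n :=
  (Ordinal (ltn_pmod (x.1 + k) mpos),
   if odd k then (s x.2.2, t x.2.1) else (s x.2.1, t x.2.2)).

Lemma gfun_inj m n mpos k s t : injective (@gfun m n mpos k s t).
Proof.
move=> [i [a b]] [j [c d]]; rewrite /gfun /=.
case: (odd k) => -[h0 /perm_inj h1 /perm_inj h2];
(have hij : i = j by
  apply: val_inj; move/eqP: h0;
  rewrite eqn_modDr !modn_small // => /eqP);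
by subst.
Qed.

Lemma gfun_dedge m n mpos k s t (x y : vtx m n) : 2 %| m ->
  dedge (@gfun m n mpos k s t x) (@gfun m n mpos k s t y) = dedge x y.
Proof.
move=> m2.
move: x y => [[i hi] [a b]] [[j hj] [c d]].
rewrite /dedge /gfun /cyc_adj /plusq !minusqE /=.
rewrite !shift_eq // odd_mod; last by apply/negbTE; rewrite -dvdn2.
rewrite oddD.
have E1 : forall (u v : 'I_n) (p : {perm 'I_n}), (p u == p v) = (u == v).
  by move=> u v p; rewrite (inj_eq perm_inj).
case: (odd k); rewrite !E1 /=;
move: (j == (i+1) %% m) (i == (j+1) %% m) (j == (i + m %/ 4) %% m)
  (j == (i + (m - m %/ 4)) %% m) (a == c) (b == d) (odd i);
by do 7!case.
Qed.

Theorem claim4p3 (n m : nat) :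
  0 < n -> 0 < m -> 4 %| m -> vertex_transitive (@Gadj m n).
Proof.
move=> n0 mpos m4.
have m2 : 2 %| m by apply: dvdn_trans m4.
move=> [[i hi] [a b]] [[j hj] [c d]].
pose k := j + (m - i).
have hk : (i + k) %% m = j.
  by rewrite /k addnCA subnKC ?(ltnW hi) // modnDr modn_small.
pose s := if odd k then tperm b c else tperm a c.
pose t := if odd k then tperm a d else tperm b d.
exists (perm (@gfun_inj m n mpos k s t)); split.
  by move=> u v; rewrite /Gadj !permE !gfun_dedge.
rewrite permE /gfun /=.
have -> : Ordinal (ltn_pmod (i + k) mpos) = Ordinal hj by apply: val_inj.
rewrite /s /t; case: (odd k); by rewrite !tpermL.
Qed.
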